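(* Under the assumptions and with the function $V$ defined as follows, the minimum below exists and $$V(x)=\|x\|+\min_{u\in\mathbb{R}^m}\max_{i\in\Sigma}V(A_ix+B_iu)\quad\text{for all }x\in\mathbb{R}^n.$$ Here the system is assumed IFS$_m$, and $V(x_0)=\inf_{\Psi\in\mathcal{C}_m}\sup_{\sigma\in\Sigma^\omega}\sum_{k=0}^{\infty}\|\phi(k,\sigma,x_0,\Psi)\|$, where $\mathcal{C}_m$ is the set of all functions $\mathcal{H}_-\to\mathbb{R}^m$.
   Context: Let $\Sigma$ be a finite nonempty set and $\{(A_i,B_i)\in\mathbb{R}^{n\times n}\times\mathbb{R}^{n\times m} : i\in\Sigma\}$. Consider $x(k+1)=A_{\sigma(k)}x(k)+B_{\sigma(k)}u(k)$, $k\in\mathbb{N}=\{0,1,\dots\}$, with arbitrary switching signal $\sigma:\mathbb{N}\to\Sigma$ (set of all such: $\Sigma^\omega$). $\|\cdot\|$ is the Euclidean norm. $\mathcal{H}_-$ is the set of all tuples $(x_k,\dots,x_0;\,i_{k-1},\dots,i_0)$ with $k\in\mathbb{N}$, $x_j\in\mathbb{R}^n$, $i_j\in\Sigma$ (mode string empty when $k=0$). For a function $\Psi:\mathcal{H}_-\to\mathbb{R}^m$ (a current-mode-independent controller with memory), $\phi(k,\sigma,x_0,\Psi)$ denotes the closed-loop trajectory defined by $x(0)=x_0$ and $x(k+1)=A_{\sigma(k)}x(k)+B_{\sigma(k)}\Psi(x(k),\dots,x(0);\,\sigma(k-1),\dots,\sigma(0))$. The system is IFS$_m$ if there exists such $\Psi$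 and constants $M>0,\gamma\in[0,1)$ with $\|\phi(k,\sigma,x_0,\Psi)\|\le M\gamma^k\|x_0\|$ for all $x_0\in\mathbb{R}^n,\sigma\in\Sigma^\omega,k\in\mathbb{N}$. *)

(* Defs.v *)
From HB Require Import structures.
From mathcomp Require Import all_boot all_order all_algebra.
From mathcomp Require Import all_classical all_reals all_analysis.
Set Implicit Arguments. Unset Strict Implicit. Unset Printing Implicit Defensive.
Import Order.TTheory GRing.Theory Num.Theory.
Local Open Scope ring_scope.

Section Defs.
Variables (R : realType) (Sigma : finType) (n m : nat).
Variables (A : Sigma -> 'M[R]_n) (B : Sigma -> 'M[R]_(n, m)).

Definition vnorm (k : nat) (v : 'cV[R]_k) : R := Num.sqrt (\sum_i v i 0 ^+ 2).

(* A current-mode-independent controller with memory: a function on H_-,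
   i.e. on tuples (x_k,...,x_0 ; i_{k-1},...,i_0), k : nat. *)
Definition controller := forall k : nat, k.+1.-tuple 'cV[R]_n -> k.-tuple Sigma -> 'cV[R]_m.

Definition modes (sigma : nat -> Sigma) (k : nat) : k.-tuple Sigma :=
  [tuple sigma (k - i.+1)%N | i < k].

Fixpoint hist (sigma : nat -> Sigma) (x0 : 'cV[R]_n) (Psi : controller) (k : nat)
  : k.+1.-tuple 'cV[R]_n :=
  match k with
  | 0 => [tuple x0]
  | k'.+1 => let h := hist sigma x0 Psi k' in
      cons_tuple (A (sigma k') *m thead h + B (sigma k') *m Psi k' h (modes sigma k')) h
  end.

Definition phi (k : nat) (sigma : nat -> Sigma) (x0 : 'cV[R]_n) (Psi : controller)
  : 'cV[R]_n := thead (hist sigma x0 Psi k).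

Definition IFS_m : Prop :=
  exists (Psi : controller) (M gamma : R),
    0 < M /\ 0 <= gamma < 1 /\
    forall (x0 : 'cV[R]_n) (sigma : nat -> Sigma) (k : nat),
      vnorm (phi k sigma x0 Psi) <= M * gamma ^+ k * vnorm x0.

Local Open Scope ereal_scope.

Definition cost (x0 : 'cV[R]_n) (Psi : controller) (sigma : nat -> Sigma) : \bar R :=
  \sum_(0 <= k <oo) (vnorm (phi k sigma x0 Psi))%:E.

Definition Vfun (x0 : 'cV[R]_n) : \bar R :=
  ereal_inf [set ereal_sup [set cost x0 Psi sigma | sigma in [set: nat -> Sigma]]
            | Psi in [set: controller]].

Definition maxV (x : 'cV[R]_n) (u : 'cV[R]_m) : \bar R :=
  \big[maxe/-oo]_(i : Sigma) Vfun (A i *m x + B i *m u).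

End Defs.

(* Main.v *)
Require Import Defs.
From HB Require Import structures.
From mathcomp Require Import all_boot all_order all_algebra.
From mathcomp Require Import all_classical all_reals all_analysis.
From mathcomp Require Import zify ring lra.
Import Order.TTheory GRing.Theory Num.Theory.
Set Implicit Arguments. Unset Strict Implicit.
Local Open Scope ring_scope.

Section Norms.
Variable R : realType.

Lemma vnorm_sq p (v : 'cV[R]_p) : vnorm v ^+ 2 = \sum_i v i 0 ^+ 2.
Proof. by rewrite /vnorm sqr_sqrtr // sumr_ge0 // => i _; rewrite sqr_ge0. Qed.

Lemma vnorm_ge0' p (v : 'cV[R]_p) : 0 <= vnorm v.
Proof. exact: sqrtr_ge0. Qed.

Lemma vnorm0_entries p (v : 'cV[R]_p) : vnorm v = 0 -> forall k, v k 0 = 0.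
Proof.
move=> h k; have : \sum_i v i 0 ^+ 2 = 0 by rewrite -vnorm_sq h expr0n.
move/psumr_eq0P => /(_ (fun i _ => sqr_ge0 _) k isT) /eqP.
by rewrite sqrf_eq0 => /eqP.
Qed.

Lemma vnorm_triangle p (v w : 'cV[R]_p) : vnorm (v + w) <= vnorm v + vnorm w.
Proof.
set P := vnorm v; set Q := vnorm w.
have P0 : 0 <= P by exact: vnorm_ge0'.
have Q0 : 0 <= Q by exact: vnorm_ge0'.
have cs : \sum_i v i 0 * w i 0 <= P * Q.
  have [Pe|Pn0] := eqVneq P 0.
    rewrite Pe mul0r big1 // => i _.
    by rewrite (@vnorm0_entries _ v Pe i) mul0r.
  have [Qe|Qn0] := eqVneq Q 0.
    rewrite Qe mulr0 big1 // => i _.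
    by rewrite (@vnorm0_entries _ w Qe i) mulr0.
  have PQ : 0 < P * Q by rewrite mulr_gt0 // lt0r ?Pn0 ?Qn0.
  have h : 2 * P * Q * (\sum_i v i 0 * w i 0) <= 2 * P ^+ 2 * Q ^+ 2.
    rewrite mulr_sumr.
    apply: le_trans (_ : \sum_i (Q ^+ 2 * v i 0 ^+ 2 + P ^+ 2 * w i 0 ^+ 2) <= _).
      apply: ler_sum => i _; have := sqr_ge0 (Q * v i 0 - P * w i 0); nra.
    rewrite big_split /= -!mulr_sumr -!vnorm_sq -/P -/Q; lra.
  nra.
rewrite /vnorm -[X in _ <= X]ger0_norm ?addr_ge0 //.
rewrite -sqrtr_sqr ler_wsqrtr //.
have -> : (P + Q) ^+ 2 = P ^+ 2 + 2 * (P * Q) + Q ^+ 2 by ring.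
rewrite /P /Q !vnorm_sq.
apply: le_trans (_ : \sum_i v i 0 ^+ 2 + 2 * \sum_i v i 0 * w i 0 + \sum_i w i 0 ^+ 2 <= _); last first.
  by rewrite lerD2r lerD2l ler_pM2l.
rewrite mulr_sumr -!big_split /=; apply: ler_sum => i _; rewrite !mxE; nra.
Qed.

Lemma entry_le_vnorm p (v : 'cV[R]_p) k : `|v k 0| <= vnorm v.
Proof.
rewrite -sqrtr_sqr ler_wsqrtr // (bigD1 k) //= lerDl.
by apply: sumr_ge0 => i _; rewrite sqr_ge0.
Qed.

Lemma vnorm_le_l1 p (v : 'cV[R]_p) : vnorm v <= \sum_k `|v k 0|.
Proof.
rewrite -[X in _ <= X]ger0_norm ?sumr_ge0 // -sqrtr_sqr ler_wsqrtr //.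
suff [_ h] : 0 <= \sum_k `|v k 0| /\ \sum_i v i 0 ^+ 2 <= (\sum_k `|v k 0|) ^+ 2 by [].
elim/big_rec2 : _ => [|i y1 y2 _ [h0 h]]; first by rewrite expr0n.
split; first by rewrite addr_ge0.
have := normr_ge0 (v i 0); rewrite -[v i 0 ^+ 2]real_normK ?num_real //.
set a := `|v i 0|; nra.
Qed.

Lemma vnormN p (v : 'cV[R]_p) : vnorm (- v) = vnorm v.
Proof. by rewrite /vnorm; congr Num.sqrt; apply: eq_bigr => i _; rewrite mxE sqrrN. Qed.

Lemma vnormB p (v w : 'cV[R]_p) : vnorm (v - w) = vnorm (w - v).
Proof. by rewrite -vnormN opprB. Qed.

Lemma mx_entry_le p q (w : 'M[R]_(p, q)) i j : `|w i j| <= `|w|.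
Proof.
rewrite [X in _ <= X]mx_normrE.
exact: (le_bigmax _ (fun ij : 'I_p * 'I_q => `|w ij.1 ij.2|) (i, j)).
Qed.

Lemma mxnorm_le_vnorm p (w : 'cV[R]_p) : `|w| <= vnorm w.
Proof.
rewrite [X in X <= _]mx_normrE; apply/bigmax_leP; split; first exact: vnorm_ge0'.
by move=> [k j] _; rewrite (ord1 j) entry_le_vnorm.
Qed.

Lemma mxnorm_tr p q (w : 'M[R]_(p, q)) : `|w^T| <= `|w|.
Proof.
rewrite [X in X <= _]mx_normrE; apply/bigmax_leP; split => //.
by move=> [k j] _; rewrite mxE mx_entry_le.
Qed.

Lemma mxnorm_trE p q (w : 'M[R]_(p, q)) : `|w^T| = `|w|.
Proof. apply/le_anti/andP; split; first exact: mxnorm_tr. by have := @mxnorm_tr _ _ (w^T); rewrite trmxK. Qed.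

Definition mxK p q (M : 'M[R]_(p, q)) := \sum_k \sum_j `|M k j|.

Lemma mxK_ge0 p q (M : 'M[R]_(p, q)) : 0 <= mxK M.
Proof. by apply: sumr_ge0 => k _; apply: sumr_ge0. Qed.

Lemma entry_mul_le p q (M : 'M[R]_(p, q)) (w : 'cV[R]_q) k :
  `|(M *m w) k 0| <= (\sum_j `|M k j|) * `|w|.
Proof.
rewrite mxE mulr_suml; apply: le_trans (ler_norm_sum _ _ _) _.
apply: ler_sum => j _; rewrite normrM ler_wpM2l //; exact: mx_entry_le.
Qed.

Lemma vnorm_mul_le p q (M : 'M[R]_(p, q)) (w : 'cV[R]_q) :
  vnorm (M *m w) <= mxK M * `|w|.
Proof.
apply: le_trans (vnorm_le_l1 _) _; rewrite /mxK mulr_suml.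
by apply: ler_sum => k _; apply: entry_mul_le.
Qed.

Lemma mxnorm_mul_le p q (M : 'M[R]_(p, q)) (w : 'cV[R]_q) :
  `|M *m w| <= mxK M * `|w|.
Proof. exact: le_trans (mxnorm_le_vnorm _) (vnorm_mul_le _ _). Qed.

End Norms.


Section Main.
Variables (R : realType) (Sigma : finType) (n m : nat).
Variables (A : Sigma -> 'M[R]_n) (B : Sigma -> 'M[R]_(n, m)).

Definition scons (i : Sigma) (s : nat -> Sigma) : nat -> Sigma :=
  fun j => if j is j'.+1 then s j' else i.

Lemma val_modes (s : nat -> Sigma) k :
  val (modes s k) = [seq s (k - j.+1)%N | j <- iota 0 k].
Proof.
rewrite /modes /=.
by rewrite -val_enum_ord -map_comp.
Qed.

Lemma modes_scons i s k : modes (scons i s) k.+1 = rcons_tuple (modes s k) i.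
Proof.
apply: val_inj; rewrite (val_modes (scons i s) k.+1).
rewrite (_ : val (rcons_tuple (modes s k) i) = rcons (val (modes s k)) i) // val_modes.
rewrite -addn1 iotaD /= add0n map_cat /= addn1 subSS subnn.
rewrite cats1; congr rcons; apply/eq_in_map => j; rewrite mem_iota add0n => /andP[_ jk].
by rewrite subSS; case E: (k - j)%N => [|l] /=; [lia | congr s; lia].
Qed.

Lemma thead_rcons T k (t : k.+1.-tuple T) x : thead (rcons_tuple t x) = thead t.
Proof. by case: t => -[|a l] //= _. Qed.

Lemma histS (s : nat -> Sigma) x (Psi : controller R Sigma n m) k :
  hist A B s x Psi k.+1 = cons_tuple (A (s k) *m thead (hist A B s x Psi k)
      + B (s k) *m Psi k (hist A B s x Psi k) (modes s k)) (hist A B s x Psi k).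
Proof. by []. Qed.

Lemma hist_scons (Psi Psi' : controller R Sigma n m) i s x :
  (forall k h t, Psi k.+1 (rcons_tuple h x) (rcons_tuple t i) = Psi' k h t) ->
  forall k, hist A B (scons i s) x Psi k.+1 =
    rcons_tuple (hist A B s (A i *m x + B i *m Psi 0%N [tuple x] (modes (scons i s) 0)) Psi' k) x.
Proof.
move=> HP; elim=> [|k IH].
  by apply: val_inj.
rewrite histS IH modes_scons HP thead_rcons.
by apply: val_inj.
Qed.

Lemma phi_scons (Psi Psi' : controller R Sigma n m) i s x :
  (forall k h t, Psi k.+1 (rcons_tuple h x) (rcons_tuple t i) = Psi' k h t) ->
  forall k, phi A B k.+1 (scons i s) x Psi =
    phi A B k s (A i *m x + B i *m Psi 0%N [tuple x] (modes (scons i s) 0)) Psi'.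
Proof. by move=> HP k; rewrite /phi (@hist_scons _ _ _ s _ HP) thead_rcons. Qed.

Lemma phi0 s x (Psi : controller R Sigma n m) : phi A B 0 s x Psi = x.
Proof. by []. Qed.

Lemma vnorm_ge0 k (v : 'cV[R]_k) : 0 <= vnorm v.
Proof. exact: sqrtr_ge0. Qed.

Local Open Scope ereal_scope.

Lemma eseries_shift1 (f : nat -> \bar R) : (forall k, 0 <= f k) ->
  \sum_(1 <= k <oo) f k = \sum_(0 <= k <oo) f k.+1.
Proof.
move=> f0.
have cg := @is_cvg_nneseries R f xpredT 1%N (fun k _ _ => f0 k).
have -> : (fun N => \sum_(0 <= k < N) f k.+1) = (fun N => \sum_(1 <= k < N.+1) f k).
  by apply/funext => N; rewrite big_add1.
apply/esym/cvg_lim => //.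
by rewrite (cvg_shiftS (fun N => \sum_(1 <= k < N) f k)).
Qed.

Lemma cost_scons (Psi Psi' : controller R Sigma n m) i s x :
  (forall k h t, Psi k.+1 (rcons_tuple h x) (rcons_tuple t i) = Psi' k h t) ->
  cost A B x Psi (scons i s) =
    (vnorm x)%:E + cost A B (A i *m x + B i *m Psi 0%N [tuple x] (modes (scons i s) 0)) Psi' s.
Proof.
move=> HP; rewrite /cost nneseries_recl //; last by move=> k _; rewrite lee_fin vnorm_ge0.
rewrite eseries_shift1; last by move=> k; rewrite lee_fin vnorm_ge0.
by congr (_ + _); apply: eq_eseriesr => k _; rewrite (@phi_scons _ _ _ s _ HP).
Qed.

Lemma modes0 (s : nat -> Sigma) : modes s 0 = [tuple].
Proof. exact: tuple0. Qed.

Lemma cost_scons' (Psi Psi' : controller R Sigma n m) i s x :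
  (forall k h t, Psi k.+1 (rcons_tuple h x) (rcons_tuple t i) = Psi' k h t) ->
  cost A B x Psi (scons i s) =
    (vnorm x)%:E + cost A B (A i *m x + B i *m Psi 0%N [tuple x] [tuple]) Psi' s.
Proof. by move=> HP; rewrite (@cost_scons _ _ _ s _ HP) modes0. Qed.

Definition supc x (Psi : controller R Sigma n m) :=
  ereal_sup [set cost A B x Psi s | s in [set: nat -> Sigma]].

Lemma VfunE x : Vfun A B x = ereal_inf [set supc x Psi | Psi in [set: controller R Sigma n m]].
Proof. by []. Qed.

Lemma Vfun_le_supc x Psi : Vfun A B x <= supc x Psi.
Proof. by rewrite VfunE; apply: ereal_inf_lbound; exists Psi. Qed.

Lemma cost_ge0 x Psi s : 0 <= cost A B x Psi s.
Proof. by apply: nneseries_ge0 => k _ _; rewrite lee_fin vnorm_ge0. Qed.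

Lemma V_ge0 (i0 : Sigma) z : 0 <= Vfun A B z.
Proof.
rewrite VfunE; apply: le_ereal_inf_tmp => _ [Psi _ <-].
apply: le_trans (cost_ge0 z Psi (fun=> i0)) _.
by apply: ereal_sup_ubound; exists (fun=> i0).
Qed.

Lemma supc_ge x (Psi : controller R Sigma n m) :
  (vnorm x)%:E + maxV A B x (Psi 0%N [tuple x] [tuple]) <= supc x Psi.
Proof.
rewrite -leeBrDl // /maxV.
apply: (big_ind (fun e => e <= supc x Psi - (vnorm x)%:E)).
- exact: leNye.
- by move=> a b ha hb; rewrite ge_max ha hb.
move=> i _.
pose Psi' : controller R Sigma n m :=
  fun k h t => Psi k.+1 (rcons_tuple h x) (rcons_tuple t i).
apply: le_trans (Vfun_le_supc _ Psi') _.
apply: ge_ereal_sup => _ [s _ <-].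
rewrite leeBrDl // -(@cost_scons' Psi Psi' i s x) //.
by apply: ereal_sup_ubound; exists (scons i s).
Qed.

Lemma Vfun_ge x ustar : (forall u, maxV A B x ustar <= maxV A B x u) ->
  (vnorm x)%:E + maxV A B x ustar <= Vfun A B x.
Proof.
move=> Hmin; rewrite VfunE; apply: le_ereal_inf_tmp => _ [Psi _ <-].
by apply: le_trans (supc_ge x Psi); rewrite leeD2l.
Qed.

Definition dropl {T} {k} (t : k.+1.-tuple T) : k.-tuple T :=
  [tuple tnth t (widen_ord (leqnSn k) j) | j < k].
Definition lastt {T} {k} (t : k.+1.-tuple T) : T := tnth t ord_max.

Lemma dropl_rcons T k (t : k.-tuple T) x : dropl (rcons_tuple t x) = t.
Proof.
apply: eq_from_tnth => j; rewrite tnth_mktuple.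
rewrite (tnth_nth x) /= nth_rcons size_tuple /= ltn_ord.
by rewrite (tnth_nth x).
Qed.

Lemma lastt_rcons T k (t : k.-tuple T) x : lastt (rcons_tuple t x) = x.
Proof. by rewrite /lastt (tnth_nth x) /= nth_rcons size_tuple ltnn eqxx. Qed.

Lemma scons_eta (s : nat -> Sigma) : s = scons (s 0%N) (fun j => s j.+1).
Proof. by apply/funext => -[|j]. Qed.

Lemma Vfun_le (i0 : Sigma) x u :
  Vfun A B x <= (vnorm x)%:E + maxV A B x u.
Proof.
have [/eqP->|hfin] := boolP (maxV A B x u == +oo).
  by rewrite addey // leey.
pose y i := (A i *m x + B i *m u)%R.
have Vle i : Vfun A B (y i) <= maxV A B x u.
  exact: (le_bigmax _ (fun i => Vfun A B (y i)) i).
have fin i : Vfun A B (y i) \is a fin_num.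
  rewrite ge0_fin_numE ?(V_ge0 i0) //.
  by apply: le_lt_trans (Vle i) _; rewrite ltey.
apply/lee_addgt0Pr => e e0.
have : forall i, exists Psi', supc (y i) Psi' < Vfun A B (y i) + e%:E.
  move=> i; have [_ [Psi' _ <-] h] := lb_ereal_inf_adherent e0 (fin i).
  by exists Psi'.
case/choice => Pf HPf.
pose Psi : controller R Sigma n m := fun k =>
  match k return (k.+1.-tuple 'cV[R]_n -> k.-tuple Sigma -> 'cV[R]_m) with
  | 0 => fun _ _ => u
  | k'.+1 => fun h t => Pf (lastt t) k' (dropl h) (dropl t)
  end.
apply: le_trans (Vfun_le_supc x Psi) _.
apply: ge_ereal_sup => _ [s _ <-].
rewrite (scons_eta s) (@cost_scons' Psi (Pf (s 0%N))); last first.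
  by move=> k h t; rewrite /Psi lastt_rcons !dropl_rcons.
rewrite -addeA leeD2l //.
apply: le_trans (_ : supc (y (s 0%N)) (Pf (s 0%N)) <= _).
  by apply: ereal_sup_ubound; exists (fun j => s j.+1).
apply: le_trans (ltW (HPf _)) _.
by rewrite leeD2r.
Qed.

End Main.


Section Main2.
Variables (R : realType) (Sigma : finType) (n m : nat).
Variables (A : Sigma -> 'M[R]_n) (B : Sigma -> 'M[R]_(n, m)).

Lemma IFS_bound : IFS_m A B -> exists (Psi0 : controller R Sigma n m) (C : R),
  0 <= C /\ forall z, (supc A B z Psi0 <= (C * vnorm z)%:E)%E.
Proof.
move=> [Psi0 [M [g [M0 [/andP[g0 g1] hb]]]]].
pose g' := (g + 1) / 2.
have g'0 : 0 < g' by rewrite /g'; lra.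
have g'1 : g' < 1 by rewrite /g'; lra.
have gg' : g <= g' by rewrite /g'; lra.
exists Psi0, (M / (1 - g')); split.
  by rewrite divr_ge0 // ?subr_ge0 ltW.
move=> z; apply: ge_ereal_sup => _ [s _ <-].
rewrite /cost.
apply: (@le_trans _ _ (\sum_(0 <= k <oo) (geometric (M * vnorm z) g' k)%:E)%E).
  apply: lee_nneseries => [k _ _|k _]; first by rewrite lee_fin vnorm_ge0.
  rewrite lee_fin /geometric /=; apply: le_trans (hb z s k) _.
  rewrite mulrAC; apply: ler_wpM2l; first by rewrite mulr_ge0 ?vnorm_ge0 // ltW.
  by apply: lerXn2r; rewrite ?nnegrE // (le_trans g0).
have hg : forall k, (0 <= (geometric (M * vnorm z) g' k)%:E)%E.
  move=> k; rewrite lee_fin; apply: geometric_ge0; [by rewrite mulr_ge0 ?vnorm_ge0 // ltW | exact: ltW].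
apply: (lime_le (is_cvg_nneseries (fun k _ _ => hg k))); apply: nearW => N.
rewrite sumEFin lee_fin.
have := @geometric_le_lim R N (M * vnorm z) g'.
rewrite /series /= => h; apply: le_trans (h _ _ _) _.
- by rewrite mulr_ge0 ?vnorm_ge0 ?ltW.
- exact: g'0.
- by rewrite ger0_norm ?ltW.
by rewrite mulrAC.
Qed.


Definition sig_of (i0 : Sigma) k (t : k.-tuple Sigma) : nat -> Sigma :=
  fun j => nth i0 t (k - j.+1).

Lemma sig_of_modes i0 (s : nat -> Sigma) k j : (j < k)%N -> sig_of i0 (modes s k) j = s j.
Proof.
move=> jk; rewrite /sig_of.
rewrite (_ : nth i0 (modes s k) _ = nth i0 (val (modes s k)) (k - j.+1)) //.
rewrite val_modes (nth_map 0%N) ?size_iota ?nth_iota; first congr s; lia.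
Qed.

Lemma hist_ext (s s' : nat -> Sigma) x (Psi : controller R Sigma n m) k :
  (forall j, (j < k)%N -> s j = s' j) -> hist A B s x Psi k = hist A B s' x Psi k.
Proof.
elim: k => [//|k IH] hs; rewrite !histS.
have -> : modes s k = modes s' k.
  by apply: eq_from_tnth => j; rewrite !tnth_mktuple hs //; lia.
by rewrite IH ?hs // => j jk; apply: hs; lia.
Qed.

Definition sumc i0 (a b : 'cV[R]_n) (P1 P2 : controller R Sigma n m) : controller R Sigma n m :=
  fun k h t => P1 k (hist A B (sig_of i0 t) a P1 k) t + P2 k (hist A B (sig_of i0 t) b P2 k) t.

Lemma phiS s x (Psi : controller R Sigma n m) k :
  phi A B k.+1 s x Psi = A (s k) *m phi A B k s x Psi + B (s k) *m Psi k (hist A B s x Psi k) (modes s k).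
Proof. by rewrite /phi histS. Qed.

Lemma phi_sumc i0 a b P1 P2 s k :
  phi A B k s (a + b) (sumc i0 a b P1 P2) = phi A B k s a P1 + phi A B k s b P2.
Proof.
elim: k => [//|k IH].
rewrite !phiS IH /sumc.
rewrite (@hist_ext (sig_of i0 (modes s k)) s a P1 k); last by move=> j jk; rewrite sig_of_modes.
rewrite (@hist_ext (sig_of i0 (modes s k)) s b P2 k); last by move=> j jk; rewrite sig_of_modes.
by rewrite !mulmxDr addrACA.
Qed.

Local Open Scope ereal_scope.

Lemma supc_sumc i0 a b P1 P2 :
  supc A B (a + b) (sumc i0 a b P1 P2) <= supc A B a P1 + supc A B b P2.
Proof.
apply: ge_ereal_sup => _ [s _ <-].
apply: (@le_trans _ _ (cost A B a P1 s + cost A B b P2 s)); last first.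
  by apply: leeD; apply: ereal_sup_ubound; exists s.
rewrite /cost -nneseriesD; last 2 first.
- by move=> k _ _; rewrite lee_fin vnorm_ge0.
- by move=> k _ _; rewrite lee_fin vnorm_ge0.
apply: lee_nneseries => [k _ _|k _]; first by rewrite lee_fin vnorm_ge0.
by rewrite phi_sumc -EFinD lee_fin vnorm_triangle.
Qed.

Lemma V_lip (i0 : Sigma) : IFS_m A B -> exists C : R, (0 <= C)%R /\
  forall b d, Vfun A B (b + d)%R <= Vfun A B b + (C * vnorm d)%:E.
Proof.
move=> /IFS_bound [P0 [C [C0 hC]]]; exists C; split => // b d.
rewrite -leeBlDr // VfunE; apply: le_ereal_inf_tmp => _ [P1 _ <-].
rewrite leeBlDr //; apply: le_trans (Vfun_le_supc A B _ (sumc i0 b d P1 P0)) _.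
by apply: le_trans (supc_sumc _ _ _ _ _) _; rewrite leeD2l.
Qed.

End Main2.


Import numFieldNormedType.Exports.

Section Main3.
Variables (R : realType) (Sigma : finType) (n m : nat).
Variables (A : Sigma -> 'M[R]_n) (B : Sigma -> 'M[R]_(n, m)).
Variable (i0 : Sigma).
Hypothesis hIFS : IFS_m A B.

Lemma Vfin z : Vfun A B z \is a fin_num.
Proof.
have [P0 [C [C0 hC]]] := IFS_bound hIFS.
rewrite ge0_fin_numE ?(V_ge0 A B i0) //.
by apply: le_lt_trans (Vfun_le_supc A B z P0) _; apply: le_lt_trans (hC z) _; rewrite ltry.
Qed.

Definition v z := fine (Vfun A B z).

Lemma VE z : Vfun A B z = (v z)%:E.
Proof. by rewrite /v fineK // Vfin. Qed.

Lemma v_ge0 z : 0 <= v z.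
Proof. by have := V_ge0 A B i0 z; rewrite VE lee_fin. Qed.

Lemma v_ge_norm z : vnorm z <= v z.
Proof.
rewrite -lee_fin -VE VfunE; apply: le_ereal_inf_tmp => _ [Psi _ <-].
apply: le_trans (supc_ge A B z Psi); apply: leeDl.
apply: le_trans (V_ge0 A B i0 (A i0 *m z + B i0 *m Psi 0%N [tuple z] [tuple])) _.
exact: (le_bigmax _ (fun i => Vfun A B (A i *m z + B i *m Psi 0%N [tuple z] [tuple])) i0).
Qed.

Lemma v_lip : exists C, 0 <= C /\ forall a b, v a <= v b + C * vnorm (a - b).
Proof.
have [C [C0 hC]] := V_lip i0 hIFS.
exists C; split => // a b.
have := hC b (a - b); rewrite addrC subrK !VE -EFinD lee_fin.
by [].
Qed.

Variable x : 'cV[R]_n.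

Definition F u := \big[Num.max/0]_i v (A i *m x + B i *m u).

Lemma F_ge0 u : 0 <= F u.
Proof. exact: bigmax_ge_id. Qed.

Lemma F_ge u i : v (A i *m x + B i *m u) <= F u.
Proof. exact: (le_bigmax _ (fun i => v (A i *m x + B i *m u)) i). Qed.

Lemma maxVE u : maxV A B x u = (F u)%:E.
Proof.
rewrite /maxV /F -EFin_bigmax.
under eq_bigr do rewrite VE.
apply/le_anti/andP; split.
  apply: (big_ind (fun e => (e <= _)%E)); first exact: leNye.
    by move=> a b ha hb; rewrite ge_max ha hb.
  move=> i _; exact: (le_bigmax _ (fun i => (v (A i *m x + B i *m u))%:E) i).
apply: (big_ind (fun e => (e <= _)%E)).
- apply: le_trans (_ : ((v (A i0 *m x + B i0 *m u))%:E <= _)%E).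
    by rewrite lee_fin v_ge0.
  exact: (le_bigmax _ (fun i => (v (A i *m x + B i *m u))%:E) i0).
- by move=> a b ha hb; rewrite ge_max ha hb.
move=> i _; exact: (le_bigmax _ (fun i => (v (A i *m x + B i *m u))%:E) i).
Qed.


Definition KB := \sum_i mxK (B i).

Lemma mxK_le_KB i : mxK (B i) <= KB.
Proof.
rewrite /KB (bigD1 i) //= lerDl; apply: sumr_ge0 => j _; exact: mxK_ge0.
Qed.

Lemma yB u u' i : (A i *m x + B i *m u) - (A i *m x + B i *m u') = B i *m (u - u').
Proof. by rewrite opprD addrACA subrr add0r mulmxBr. Qed.

Lemma F_lip : exists L, 0 <= L /\ forall u u', F u <= F u' + L * `|u - u'|.
Proof.
have [C [C0 hC]] := v_lip.
exists (C * KB); split; first by rewrite mulr_ge0 // /KB sumr_ge0 // => i _; exact: mxK_ge0.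
move=> u u'; apply/bigmax_leP; split.
  by rewrite addr_ge0 ?F_ge0 // mulr_ge0 // mulr_ge0 // /KB sumr_ge0 // => i _; exact: mxK_ge0.
move=> i _; apply: le_trans (hC _ (A i *m x + B i *m u')) _.
rewrite yB -mulrA; apply: lerD; first exact: F_ge.
apply: ler_wpM2l => //; apply: le_trans (vnorm_mul_le _ _) _.
by apply: ler_wpM2r => //; exact: mxK_le_KB.
Qed.

Definition Gm := \sum_i (B i)^T *m B i.
Definition Pr (u : 'cV[R]_m) := (pinvmx Gm)^T *m (Gm *m u).

Lemma Gm_tr : Gm^T = Gm.
Proof. rewrite /Gm linear_sum; apply: eq_bigr => i _ /=. by rewrite trmx_mul trmxK. Qed.

Lemma GmP u : Gm *m Pr u = Gm *m u.
Proof.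
apply: trmx_inj; rewrite trmx_mul [RHS]trmx_mul Gm_tr.
have -> : (Pr u)^T = u^T *m Gm *m pinvmx Gm by rewrite /Pr trmx_mul trmxK trmx_mul Gm_tr.
by rewrite mulmxKpV // submxMl.
Qed.

Lemma BPr u i : B i *m Pr u = B i *m u.
Proof.
set d := Pr u - u.
have Gd : Gm *m d = 0 by rewrite mulmxBr GmP subrr.
have h0 : \sum_j \sum_k ((B j *m d) k 0) ^+ 2 = 0.
  transitivity ((d^T *m (Gm *m d)) 0 0); last by rewrite Gd mulmx0 mxE.
  rewrite /Gm mulmx_suml mulmx_sumr summxE; apply: eq_bigr => j _.
  have -> : d^T *m ((B j)^T *m B j *m d) = (B j *m d)^T *m (B j *m d).
    by rewrite trmx_mul !mulmxA.
  rewrite mxE; apply: eq_bigr => k _; by rewrite expr2 !mxE.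
have /psumr_eq0P h1 := h0.
have hi : \sum_k ((B i *m d) k 0) ^+ 2 = 0.
  apply: h1 => // j _; apply: sumr_ge0 => k _; exact: sqr_ge0.
have /psumr_eq0P h2 := hi.
apply/eqP; rewrite -subr_eq0 -mulmxBr -/d; apply/eqP/matrixP => k j.
rewrite (ord1 j) [RHS]mxE; apply/eqP; rewrite -sqrf_eq0; apply/eqP.
by apply: h2 => // l _; exact: sqr_ge0.
Qed.

Lemma F_Pr u : F (Pr u) = F u.
Proof. by rewrite /F; apply: eq_bigr => i _; rewrite BPr. Qed.

Definition rho0 := mxK (pinvmx Gm)^T * \sum_i mxK (B i)^T * (F 0 + vnorm (A i *m x)).

Lemma Pr_bound u : F u <= F 0 -> `|Pr u| <= rho0.
Proof.
move=> Fu; apply: le_trans (mxnorm_mul_le _ _) _.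
apply: ler_wpM2l; first exact: mxK_ge0.
rewrite /Gm mulmx_suml; apply: le_trans (ler_norm_sum _ _ _) _.
apply: ler_sum => i _; rewrite -mulmxA; apply: le_trans (mxnorm_mul_le _ _) _.
apply: ler_wpM2l; first exact: mxK_ge0.
apply: le_trans (mxnorm_le_vnorm _) _.
have -> : B i *m u = (A i *m x + B i *m u) + - (A i *m x) by rewrite addrC addKr.
apply: le_trans (vnorm_triangle _ _) _; rewrite vnormN lerD2r.
apply: le_trans (v_ge_norm _) _; apply: le_trans (F_ge u i) _; exact: Fu.
Qed.

Lemma rho0_ge0 : 0 <= rho0.
Proof.
rewrite mulr_ge0 ?mxK_ge0 // sumr_ge0 // => i _.
by rewrite mulr_ge0 ?mxK_ge0 // addr_ge0 ?F_ge0 ?vnorm_ge0.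
Qed.

Definition Gr (r : 'rV[R]_m) : R := F r^T.

Lemma Gr_cont : continuous (Gr : 'rV[R]_m -> R).
Proof.
have [L [L0 hL]] := F_lip.
move=> r; apply/(@cvgrPdist_le _ _ _ (nbhs r) (nbhs_filter r)) => e e0.
have d0 : 0 < e / (L + 1) by rewrite divr_gt0 // ltr_wpDl.
near=> t.
have ht : `|r - t| < e / (L + 1).
  near: t; have := nbhsx_ballx r _ d0; rewrite -ball_normE.
  by apply: filterS => t.
have h1 := hL r^T t^T; have h2 := hL t^T r^T.
rewrite -!linearB /= !mxnorm_trE in h1 h2.
rewrite distrC in h2.
have ht' : L * `|r - t| <= e.
  apply: le_trans (_ : L * (e / (L + 1)) <= e).
    by apply: ler_wpM2l => //; exact: ltW.
  rewrite mulrCA -[X in _ <= X]mulr1; apply: ler_wpM2l; first exact: ltW.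
  by rewrite ler_pdivrMr ?ltr_wpDl // mul1r lerDl.
move: h1 h2 ht'; rewrite /Gr; set a := F r^T; set b := F t^T; set c := L * _ => h1 h2 h3.
rewrite ler_norml; apply/andP; split; lra.
Unshelve. all: by end_near.
Qed.

Lemma F_min : exists ustar, forall u, F ustar <= F u.
Proof.
pose K := closed_ball_ Num.norm (0 : 'rV[R]_m) rho0.
have K0 : (K !=set0)%classic.
  by exists 0; change (`|(0 : 'rV[R]_m) - 0| <= rho0); rewrite subrr normr0 rho0_ge0.
have Kc : compact K.
  apply: bounded_closed_compact; last exact: closed_closed_ball_.
  exists rho0; split; first exact: num_real.
  move=> M hM t Kt.
  have ht : `|(0 : 'rV[R]_m) - t| <= rho0 by exact: Kt.
  rewrite sub0r normrN in ht.
  exact: le_trans ht (ltW hM).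
have [c cK hc] := EVT_min_rV K0 Kc (continuous_subspaceT Gr_cont).
exists c^T => u.
have K0' : (0 : 'rV[R]_m) \in K.
  rewrite inE; change (`|(0 : 'rV[R]_m) - 0| <= rho0).
  by rewrite subrr normr0 rho0_ge0.
have hc0 := hc _ K0'.
have Gc : Gr c = F c^T by reflexivity.
have G0 : Gr 0 = F 0.
  by rewrite /Gr; congr F; apply/matrixP => i j; rewrite !mxE.
have h1 : F c^T <= F 0 by rewrite -G0.
have hcw : forall t, t \in K -> F c^T <= F t^T by exact: hc.
move: h1 hcw; set w := c^T; clearbody w => h1 hcw.
have [Fu|Fu] := orP (orbN (F u <= F 0)); last first.
  by apply: le_trans h1 (ltW _); rewrite ltNge.
have KP : (Pr u)^T \in K.
  rewrite inE; change (`|(0 : 'rV[R]_m) - (Pr u)^T| <= rho0).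
  by rewrite sub0r normrN mxnorm_trE Pr_bound.
by have := hcw _ KP; rewrite trmxK F_Pr.
Qed.






End Main3.


Unset Implicit Arguments.
Set Strict Implicit.

Theorem mainTheorem4 (R : realType) (Sigma : finType) (n m : nat)
  (A : Sigma -> 'M[R]_n) (B : Sigma -> 'M[R]_(n, m))
  (hSigma : (0 < #|Sigma|)%N)
  (hIFS : IFS_m A B) :
  forall x : 'cV[R]_n,
    exists ustar : 'cV[R]_m,
      (forall u : 'cV[R]_m, (maxV A B x ustar <= maxV A B x u)%E) /\
      Vfun A B x = ((vnorm x)%:E + maxV A B x ustar)%E.
Proof.
move=> x; case/card_gt0P: hSigma => i0 _.
have [us hus] := F_min i0 hIFS x.
have hmin : forall u, (maxV A B x us <= maxV A B x u)%E.
  by move=> u; rewrite (maxVE i0 hIFS) (maxVE i0 hIFS) lee_fin.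
exists us; split => //.
apply/le_anti/andP; split; first exact: Vfun_le.
exact: Vfun_ge.
Qed.
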